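(* For every $n\ge1$, $\alpha_{\mathrm{od}}(P_n)=\lceil n/3\rceil$, and for every $n\ge3$, $\alpha_{\mathrm{od}}(C_n)=\lceil(n-2)/3\rceil$.
   Context: $P_n$ is the path on $n$ vertices and $C_n$ the cycle on $n$ vertices. An odd independent set in $G=(V,E)$ is an independent set $S$ such that every $v\in V\setminus S$ has either no neighbor or an odd number of neighbors in $S$; $\alpha_{\mathrm{od}}(G)$ is its maximum size. *)

(* Defs.v *)
From mathcomp Require Import all_boot.
Set Implicit Arguments. Unset Strict Implicit. Unset Printing Implicit Defensive.

(* A simple graph on a finite vertex type T is given by a symmetric,
   irreflexive adjacency relation e : rel T. *)

Definition nbrs_in (T : finType) (e : rel T) (S : {set T}) (v : T) : {set T} :=
  [set u in S | e v u].

Definition independent (T : finType) (e : rel T) (S : {set T}) : bool :=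
  [forall u in S, forall v in S, ~~ e u v].

Definition odd_independent (T : finType) (e : rel T) (S : {set T}) : bool :=
  independent e S &&
  [forall v in ~: S, (#|nbrs_in e S v| == 0) || odd #|nbrs_in e S v|].

(* odd independence number: maximum size of an odd independent set
   (the empty set is always odd independent, so this is well defined) *)
Definition alpha_od (T : finType) (e : rel T) : nat :=
  \max_(S : {set T} | odd_independent e S) #|S|.

Definition path_rel (n : nat) : rel 'I_n :=
  fun i j => (i.+1 == j :> nat) || (j.+1 == i :> nat).

Definition cycle_rel (n : nat) : rel 'I_n :=
  fun i j => (i.+1 %% n == j :> nat) || (j.+1 %% n == i :> nat).
Arguments path_rel n : clear implicits.
Arguments cycle_rel n : clear implicits.

(* Main.v *)
Require Import Defs.
From mathcomp Require Import all_boot.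
From mathcomp Require Import zify.

Ltac olia :=
  repeat match goal with H : ?T |- _ =>
    lazymatch T with
    | forall _, _ => clear H
    | context [nat_of_ord _] => revert H end end;
  repeat match goal with |- context [@nat_of_ord ?n ?x] =>
    generalize (ltn_ord x); generalize (@nat_of_ord n x); intro end;
  intros; lia.

Section Gen.
Variables (T : finType) (e : rel T) (S : {set T}).

Lemma oi_indep : odd_independent e S -> forall u v, u \in S -> v \in S -> ~~ e u v.
Proof.
case/andP=> /forallP H _ u v uS vS.
by have /implyP/(_ uS)/forallP/(_ v)/implyP/(_ vS) := H u.
Qed.

Lemma oi_two : odd_independent e S -> forall v a b, a \in S -> b \in S -> a != b ->
  e v a -> e v b -> (forall u, e v u -> u = a \/ u = b) -> False.
Proof.
move=> oi v a b aS bS ab eva evb Hu.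
have vS : v \notin S.
  by apply/negP=> vS; move: (oi_indep oi v a vS aS); rewrite eva.
have E : nbrs_in e S v = [set a; b].
  apply/setP=> u; rewrite !inE.
  apply/andP/orP.
    by case=> _ /Hu [->|->]; [left|right].
  by case=> /eqP ->; split.
move: oi => /andP [_ /forallP /(_ v)]. rewrite in_setC vS /= E cards2 ab.
by [].
Qed.

Lemma oi_le1 : forall v, (forall u w, u \in S -> w \in S -> e v u -> e v w -> u = w) ->
  (#|nbrs_in e S v| == 0) || odd #|nbrs_in e S v|.
Proof.
move=> v H.
have : #|nbrs_in e S v| <= 1.
  apply/card_le1_eqP => u w; rewrite /nbrs_in !inE => /andP [uS eu] /andP [wS ew].
  exact: H.
by case: #|_| => [|[|]].
Qed.

Lemma count3 (m : nat) (f : T -> 'I_3 -> 'I_m) :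
  (forall s t i j, s \in S -> t \in S -> f s i = f t j -> s = t /\ i = j) ->
  #|S| * 3 <= m.
Proof.
move=> H.
have <- : #|setX S [set: 'I_3]| = #|S| * 3 by rewrite cardsX cardsT card_ord.
rewrite -(card_in_imset (f := fun p => f p.1 p.2)).
  by apply: leq_trans (max_card _) _; rewrite card_ord.
move=> [s i] [t j]; rewrite !inE /= => /andP [sS _] /andP [tS _] E.
by case: (H _ _ _ _ sS tS E) => -> ->.
Qed.

End Gen.
Arguments oi_indep {T e S}.
Arguments oi_two {T e S}.
Arguments oi_le1 {T e S}.
Arguments count3 {T S m}.

Lemma alpha_le (T : finType) (e : rel T) c :
  (forall S, odd_independent e S -> #|S| <= c) -> alpha_od e <= c.
Proof. by move=> H; apply/bigmax_leqP. Qed.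

Lemma alpha_ge (T : finType) (e : rel T) S :
  odd_independent e S -> #|S| <= alpha_od e.
Proof. by move=> H; apply: (leq_bigmax_cond (P := fun S => odd_independent e S)). Qed.

Lemma card3 m c : 3 * c <= m + 3 ->
  #|[set v : 'I_m.+1 | (v %% 3 == 0) && (v < 3 * c)]| = c.
Proof.
move=> hc.
have inj : injective (fun k : 'I_c => inord (3 * k) : 'I_m.+1).
  move=> k l /(congr1 (@nat_of_ord _)) /=; have := ltn_ord k; have := ltn_ord l => hl hk.
  rewrite !inordK; try lia.
  by move=> h; apply: ord_inj => /=; lia.
rewrite -[in RHS](card_ord c) -(card_imset _ inj); apply: eq_card => v.
rewrite inE; apply/idP/imsetP.
  move=> h; have hv : v %/ 3 < c by lia.
  exists (Ordinal hv) => //; apply: ord_inj => /=; rewrite inordK; lia.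
case=> k _ ->; have := ltn_ord k => hk; rewrite inordK; lia.
Qed.

Lemma path_upper m (S : {set 'I_m.+1}) :
  odd_independent (path_rel m.+1) S -> #|S| * 3 <= m.+3.
Proof.
move=> oi.
have H1 : forall s t, s \in S -> t \in S -> (t : nat) <> s + 1.
  move=> s t sS tS E; move: (oi_indep oi s t sS tS); rewrite /path_rel; lia.
have H2 : forall s t, s \in S -> t \in S -> (t : nat) <> s + 2.
  move=> s t sS tS E; have := ltn_ord t => ht.
  have vlt : s + 1 < m.+1 by lia.
  apply: (oi_two oi (Ordinal vlt) _ _ sS tS).
  - by apply/eqP => st; move: E; rewrite st; lia.
  - rewrite /path_rel /=; lia.
  - rewrite /path_rel /=; lia.
  - move=> u; rewrite /path_rel /= => h.
    have : (u : nat) = s \/ (u : nat) = t by lia.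
    by case=> h'; [left|right]; apply: ord_inj.
apply: (@count3 _ S m.+3 (fun s (i : 'I_3) => inord (s + i))).
move=> s t i j sS tS.
have := ltn_ord s; have := ltn_ord t; have := ltn_ord i; have := ltn_ord j.
move=> hj hi ht hs /(congr1 (@nat_of_ord _)); rewrite !inordK; try lia.
move=> E.
have := H1 s t sS tS; have := H2 s t sS tS; have := H1 t s tS sS; have := H2 t s tS sS.
move=> a b c d.
have st : (s : nat) = t by olia.
split; apply: ord_inj => //=; olia.
Qed.

Lemma path_lower m :
  odd_independent (path_rel m.+1)
    [set v : 'I_m.+1 | (v %% 3 == 0) && (v < 3 * ((m.+1 + 2) %/ 3))].
Proof.
apply/andP; split.
  apply/forallP => u; apply/implyP => uS; apply/forallP => v; apply/implyP => vS.
  rewrite inE in uS; rewrite inE in vS; rewrite /path_rel; lia.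
apply/forallP => v; apply/implyP => _; apply: oi_le1 => u w.
rewrite !inE /path_rel => uS wS hu hw; apply: ord_inj; olia.
Qed.

Lemma cyc n (a b : 'I_n) :
  ((a : nat).+1 %% n == b) = ((a.+1 == b :> nat) || ((a.+1 == n) && (b == 0 :> nat))).
Proof.
have ha := ltn_ord a; have hb := ltn_ord b.
case: (ltngtP a.+1 n) => h.
- rewrite modn_small //; case: (b =P 0 :> nat) => hb0; rewrite ?andbT ?andbF ?orbF; lia.
- lia.
- rewrite h modnn; case: (b =P 0 :> nat) => hb0; rewrite ?andbT ?andbF ?orbF; lia.
Qed.

Lemma wrap n a : a < n + n -> (a %% n = a /\ a < n) \/ (a %% n + n = a /\ n <= a).
Proof.
move=> h; case: (ltnP a n) => h2; first by left; rewrite modn_small.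
right; split => //.
have -> : a = (a - n) + n by lia.
rewrite modnDr modn_small; lia.
Qed.

Lemma cycle_upper m (S : {set 'I_m.+1}) :
  2 <= m -> odd_independent (cycle_rel m.+1) S -> #|S| * 3 <= m.+1.
Proof.
move=> hm oi.
have H1 : forall s t, s \in S -> t \in S -> (t : nat) <> s + 1 /\ t + m.+1 <> s + 1.
  move=> s t sS tS; move: (oi_indep oi s t sS tS); rewrite /cycle_rel !cyc; olia.
have H2 : forall s t, s \in S -> t \in S -> (t : nat) <> s + 2 /\ t + m.+1 <> s + 2.
  move=> s t sS tS.
  suff : ~ ((t : nat) = s + 2 \/ t + m.+1 = s + 2) by olia.
  move=> E.
  have [v vK] : exists v : 'I_m.+1,
      ((v : nat) = s.+1 /\ s.+1 < m.+1) \/ ((v : nat) = 0 /\ s.+1 = m.+1).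
    have hs := ltn_ord s.
    case: (ltnP s.+1 m.+1) => h.
      by exists (Ordinal h); left.
    by exists ord0; right; split => //; lia.
  apply: (oi_two oi v s t sS tS).
  - by apply/eqP => st; rewrite st in E; olia.
  - rewrite /cycle_rel !cyc; olia.
  - rewrite /cycle_rel !cyc; olia.
  - move=> u; rewrite /cycle_rel !cyc => h.
    have : (u : nat) = s \/ (u : nat) = t by olia.
    by case=> h'; [left|right]; apply: ord_inj.
apply: (@count3 _ S m.+1 (fun s (i : 'I_3) => inord ((s + i) %% m.+1))).
move=> s t i j sS tS /(congr1 (@nat_of_ord _)); rewrite !inordK ?ltn_pmod //.
have ws : s + i < m.+1 + m.+1 by olia.
have wt : t + j < m.+1 + m.+1 by olia.
move: (wrap _ _ ws) (wrap _ _ wt); move: ((s + i) %% m.+1) ((t + j) %% m.+1) => x y ws' wt' E.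
have := H1 s t sS tS; have := H2 s t sS tS; have := H1 t s tS sS; have := H2 t s tS sS.
move=> a b c d.
have st : (s : nat) = t by olia.
split; apply: ord_inj => //=; olia.
Qed.

Lemma cycle_lower m :
  odd_independent (cycle_rel m.+1)
    [set v : 'I_m.+1 | (v %% 3 == 0) && (v < 3 * (m.+1 %/ 3))].
Proof.
apply/andP; split.
  apply/forallP => u; apply/implyP => uS; apply/forallP => v; apply/implyP => vS.
  rewrite inE in uS; rewrite inE in vS; rewrite /cycle_rel !cyc; olia.
apply/forallP => v; apply/implyP => _; apply: oi_le1 => u w.
rewrite !inE /cycle_rel !cyc => uS wS hu hw; apply: ord_inj; olia.
Qed.

Theorem proposition7 :
  (forall n : nat, 1 <= n -> alpha_od (path_rel n) = (n + 2) %/ 3) /\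
  (forall n : nat, 3 <= n -> alpha_od (cycle_rel n) = (n - 2 + 2) %/ 3).
Proof.
split.
- move=> [|m] // _; apply/eqP; rewrite eqn_leq; apply/andP; split.
    by apply: alpha_le => S oi; have := path_upper _ _ oi; move: #|S| => k; lia.
  have := alpha_ge _ _ _ (path_lower m); rewrite card3; lia.
- move=> [|m] // h; apply/eqP; rewrite eqn_leq; apply/andP; split.
    apply: alpha_le => S oi; by have := cycle_upper _ _ h oi; move: #|S| => k; lia.
  have := alpha_ge _ _ _ (cycle_lower m); rewrite card3; lia.
Qed.
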